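(* Let $I_1\subset\mathbb{R}$ be an open interval and $I_2$ an open, relatively compact subinterval of $I_1$. For every integer $n\ge1$ and every $\varepsilon>0$ there exists $\delta>0$ such that for every $C^1$ map $h:I_1\to\mathbb{R}$ with $\|h-\mathrm{id}\|_{1,I_1}<\delta$ and every $x\in I_2$, the iterate $h^n(x)$ is defined and $$|(h^n(x)-x)-n(h(x)-x)|\le\varepsilon\,|h(x)-x|.$$
   Context: For an open set $J\subset\mathbb{R}$ and a $C^1$ map $u$ on $J$, $\|u\|_{1,J}=\sup_{x\in J}(|u(x)|+|u'(x)|)$. *)

(* Defs.v *)
From Stdlib Require Import Reals Lra.
Open Scope R_scope.

Definition is_open_interval (I : R -> Prop) : Prop :=
  (exists x, I x) /\
  (forall x y z, I x -> I z -> x <= y <= z -> I y) /\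
  (forall x, I x -> exists r, 0 < r /\ forall y, Rabs (y - x) < r -> I y).

(* I2 is relatively compact in I1: its closure (compact) lies in I1,
   i.e. I2 is contained in a compact segment [c,d] contained in I1. *)
Definition rel_compact_in (I2 I1 : R -> Prop) : Prop :=
  exists c d, (forall x, I2 x -> c <= x <= d) /\ (forall x, c <= x <= d -> I1 x).

Definition C1_on (J : R -> Prop) (h h' : R -> R) : Prop :=
  (forall x, J x -> derivable_pt_lim h x (h' x)) /\
  (forall x, J x -> continuity_pt h' x).

(* ||h - id||_{1,J} < delta, i.e. sup_{x in J} (|h x - x| + |h' x - 1|) < delta. *)
Definition C1_dist_id_lt (J : R -> Prop) (h h' : R -> R) (delta : R) : Prop :=
  exists M, M < delta /\ forall x, J x -> Rabs (h x - x) + Rabs (h' x - 1) <= M.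

Fixpoint iter_fun (n : nat) (h : R -> R) (x : R) : R :=
  match n with
  | O => x
  | S k => h (iter_fun k h x)
  end.

(* Main.v *)
Require Import Defs.
From Stdlib Require Import Reals Lra Lia Psatz.
Open Scope R_scope.

Lemma abs_bnd (z : R) : - Rabs z <= z <= Rabs z.
Proof. unfold Rabs; destruct Rcase_abs; lra. Qed.

Lemma lip_lt (I : R -> Prop) (h h' : R -> R) (M : R) :
  (forall x y z, I x -> I z -> x <= y <= z -> I y) ->
  (forall x, I x -> derivable_pt_lim h x (h' x)) ->
  (forall x, I x -> Rabs (h' x - 1) <= M) ->
  forall u v, I u -> I v -> u < v ->
  Rabs ((h v - v) - (h u - u)) <= M * Rabs (v - u).
Proof.
  intros Hc Hd Hb u v Hu Hv Huv.
  destruct (MVT_cor2 (fun y => h y - y) (fun y => h' y - 1) u v Huv) as [c [Hf Hcc]].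
  { intros c Hc'. assert (Ic : I c) by (apply (Hc u c v); auto).
    exact (derivable_pt_lim_minus h id c _ _ (Hd c Ic) (derivable_pt_lim_id c)). }
  assert (Ic : I c) by (apply (Hc u c v); auto; lra).
  rewrite Hf, Rabs_mult. apply Rmult_le_compat_r. apply Rabs_pos. auto.
Qed.

Lemma lip (I : R -> Prop) (h h' : R -> R) (M : R) :
  (forall x y z, I x -> I z -> x <= y <= z -> I y) ->
  (forall x, I x -> derivable_pt_lim h x (h' x)) ->
  (forall x, I x -> Rabs (h' x - 1) <= M) ->
  forall u v, I u -> I v ->
  Rabs ((h v - v) - (h u - u)) <= M * Rabs (v - u).
Proof.
  intros Hc Hd Hb u v Hu Hv.
  destruct (Rtotal_order u v) as [H|[H|H]].
  - eapply lip_lt; eauto.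
  - subst. replace (h v - v - (h v - v)) with 0 by ring.
    replace (v - v) with 0 by ring. rewrite Rabs_R0. lra.
  - rewrite <- Rabs_Ropp, Rabs_minus_sym.
    replace (- (h v - v - (h u - u))) with (h u - u - (h v - v)) by ring.
    eapply lip_lt; eauto.
Qed.

Theorem lemma3p10 (I1 I2 : R -> Prop) :
  is_open_interval I1 -> is_open_interval I2 ->
  (forall x, I2 x -> I1 x) -> rel_compact_in I2 I1 ->
  forall (n : nat), (1 <= n)%nat ->
  forall eps : R, 0 < eps ->
  exists delta : R, 0 < delta /\
    forall h h' : R -> R,
      C1_on I1 h h' -> C1_dist_id_lt I1 h h' delta ->
      forall x, I2 x ->
        (forall k, (k < n)%nat -> I1 (iter_fun k h x)) /\
        Rabs ((iter_fun n h x - x) - INR n * (h x - x)) <= eps * Rabs (h x - x).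
Proof.
  intros [[x0 Hx0] [Hconv Hopen]] [[y0 Hy0] _] H21 [c [d [Hcd Hcd1]]] n Hn eps Heps.
  assert (Icd : I1 c /\ I1 d) by (split; apply Hcd1; specialize (Hcd y0 Hy0); lra).
  destruct Icd as [Ic Id].
  destruct (Hopen c Ic) as [r1 [Hr1 Hb1]].
  destruct (Hopen d Id) as [r2 [Hr2 Hb2]].
  set (r := Rmin r1 r2 / 2).
  assert (Hr : 0 < r) by (unfold r, Rmin; destruct Rle_dec; lra).
  assert (Hrr : r < r1 /\ r < r2) by (unfold r, Rmin; destruct Rle_dec; lra).
  assert (Hmarg : forall y, c - r <= y <= d + r -> I1 y).
  { intros y Hy. destruct (Rle_dec c y) as [H1|H1].
    - destruct (Rle_dec y d) as [H2|H2].
      + apply Hcd1; lra.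
      + apply Hb2. rewrite Rabs_right; lra.
    - apply Hb1. rewrite Rabs_left; lra. }
  set (N := INR n).
  assert (HN : 1 <= N) by (unfold N; replace 1 with (INR 1) by reflexivity; apply le_INR; auto).
  assert (H3 : 1 <= 3 ^ n) by (apply pow_R1_Rle; lra).
  set (K := N * 3 ^ n).
  assert (HK : 0 < K) by (unfold K; nra).
  set (delta := Rmin 1 (Rmin (r / (N + 1)) (eps / K))).
  assert (Hd1 : delta <= 1) by apply Rmin_l.
  assert (Hd2 : delta <= r / (N + 1)) by (eapply Rle_trans; [apply Rmin_r|apply Rmin_l]).
  assert (Hd3 : delta <= eps / K) by (eapply Rle_trans; [apply Rmin_r|apply Rmin_r]).
  assert (Hdp : 0 < delta).
  { unfold delta. repeat apply Rmin_pos; try lra; apply Rdiv_lt_0_compat; lra. }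
  exists delta. split; [exact Hdp|].
  intros h h' [Hd _] [M [HM Hbd]] x Hx.
  assert (HM0 : 0 <= M).
  { specialize (Hbd x0 Hx0). pose proof (Rabs_pos (h x0 - x0)).
    pose proof (Rabs_pos (h' x0 - 1)). lra. }
  assert (HMr : M * (N + 1) < r).
  { assert (M < r / (N+1)) by lra.
    apply (Rmult_lt_compat_r (N+1)) in H; [|lra].
    unfold Rdiv in H. rewrite Rmult_assoc, Rinv_l in H; lra. }
  assert (HMe : M * K <= eps).
  { assert (M <= eps / K) by lra.
    apply (Rmult_le_compat_r K) in H; [|lra].
    unfold Rdiv in H. rewrite Rmult_assoc, Rinv_l in H; lra. }
  assert (Hlip : forall u v, I1 u -> I1 v ->
     Rabs ((h v - v) - (h u - u)) <= M * Rabs (v - u)).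
  { apply lip with h'; auto. intros z Hz. specialize (Hbd z Hz).
    pose proof (Rabs_pos (h z - z)). lra. }
  pose proof (Hcd x Hx) as Hxcd.
  set (a := h x - x).
  assert (HA : 0 <= Rabs a) by apply Rabs_pos.
  assert (Claim : forall k, (k <= n)%nat ->
     Rabs (iter_fun k h x - x) <= INR k * M /\
     Rabs (iter_fun k h x - x) <= 3 ^ k * Rabs a /\
     Rabs (iter_fun k h x - x - INR k * a) <= M * INR k * 3 ^ k * Rabs a).
  { induction k as [|k IH]; intros Hk.
    - simpl. replace (x - x) with 0 by ring.
      replace (0 - 0 * a) with 0 by ring. rewrite Rabs_R0. lra.
    - destruct (IH ltac:(lia)) as [E1 [E2 E3]].
      set (y := iter_fun k h x) in *.
      assert (Hkn : INR k <= N) by (unfold N; apply le_INR; lia).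
      assert (Hk0 : 0 <= INR k) by apply pos_INR.
      assert (Hy : I1 y).
      { apply Hmarg. assert (INR k * M <= N * M) by nra.
        pose proof (abs_bnd (y - x)). lra. }
      change (iter_fun (S k) h x) with (h y).
      rewrite S_INR. simpl pow.
      assert (Hg : Rabs (h y - y) <= M).
      { specialize (Hbd y Hy). pose proof (Rabs_pos (h' y - 1)). lra. }
      assert (Hl := Hlip x y (H21 x Hx) Hy).
      change (h x - x) with a in Hl.
      assert (T1 : Rabs (h y - x) <= Rabs (y - x) + Rabs (h y - y)).
      { replace (h y - x) with ((y - x) + (h y - y)) by ring. apply Rabs_triang. }
      assert (T2 : Rabs (h y - y) <= Rabs a + M * Rabs (y - x)).
      { replace (h y - y) with ((h y - y - a) + a) by ring.
        pose proof (Rabs_triang (h y - y - a) a). lra. }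
      assert (T3 : Rabs (h y - x - (INR k + 1) * a) <=
                   Rabs (y - x - INR k * a) + M * Rabs (y - x)).
      { replace (h y - x - (INR k + 1) * a) with ((y - x - INR k * a) + (h y - y - a)) by ring.
        pose proof (Rabs_triang (y - x - INR k * a) (h y - y - a)). lra. }
      assert (P0 : 1 <= 3 ^ k) by (apply pow_R1_Rle; lra).
      assert (ME : M * Rabs (y - x) <= M * (3 ^ k * Rabs a)) by (apply Rmult_le_compat_l; lra).
      assert (PA : 0 <= 3 ^ k * Rabs a) by nra.
      assert (MPA : M * (3 ^ k * Rabs a) <= 3 ^ k * Rabs a) by nra.
      assert (Q : 0 <= M * (INR k + 1) * 3 ^ k * Rabs a).
      { apply Rmult_le_pos; [|lra]. apply Rmult_le_pos; [|lra]. nra. }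
      split; [|split]; nra. }
  split.
  - intros k Hk. destruct (Claim k ltac:(lia)) as [E1 _].
    assert (Hkn : INR k <= N) by (unfold N; apply le_INR; lia).
    assert (Hk0 : 0 <= INR k) by apply pos_INR.
    apply Hmarg. assert (INR k * M <= N * M) by nra.
    pose proof (abs_bnd (iter_fun k h x - x)). lra.
  - destruct (Claim n (Nat.le_refl n)) as [_ [_ E3]].
    fold N in E3. unfold K in HMe.
    assert (M * N * 3 ^ n * Rabs a <= eps * Rabs a).
    { replace (M * N * 3 ^ n * Rabs a) with ((M * (N * 3 ^ n)) * Rabs a) by ring.
      apply Rmult_le_compat_r; lra. }
    lra.
Qed.
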